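(* If $T$ is a subcubic tree, then $\gamma_e(T)=\gamma_{e,f}^*(T)$ if and only if $T$ is $K_{1,3}$.
   Context: All graphs are finite, simple and undirected; subcubic means maximum degree at most $3$; $K_{1,3}$ is the star with three leaves. For a graph $G$ and $D\subseteq V(G)$, and vertices $u,v$, let $\mathrm{dist}_{(G,D)}(u,v)$ be the minimum number of edges of a path $P$ in $G$ between $u$ and $v$ such that $D$ contains exactly one endvertex of $P$ and no internal vertex of $P$ ($\infty$ if no such path exists; in particular $\mathrm{dist}_{(G,D)}(u,u)=0$ for $u\in D$). Let $w_{(G,D)}(u)=\sum_{v\in D}\left(\frac12\right)^{\mathrm{dist}_{(G,D)}(u,v)-1}$ with $\left(\frac12\right)^\infty=0$. $D$ is an exponential dominating set if $w_{(G,D)}(u)\ge 1$ for every $u\in V(G)$, and $\gamma_e(G)$ is the minimum size of an exponential dominating set. The fractional porous exponential domination number $\gamma_{e,f}^*(G)$ is the optimum value of the linear program: minimize $\sum_{u\in V(G)}x(u)$ subject to $\sum_{u\in V(G)}\left(\frac12\right)^{\mathrm{dist}_G(u,v)-1}x(u)\ge 1$ for every $v\in V(G)$ and $x\ge 0$, where $\mathrm{dist}_G$ is the usual distance. *)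

(* Defs.v *)
(* Simple graphs: symmetric irreflexive relation e on a finType T. *)
From HB Require Import structures.
From mathcomp Require Import all_boot all_order all_algebra.
Set Implicit Arguments. Unset Strict Implicit. Unset Printing Implicit Defensive.
Import Order.TTheory GRing.Theory Num.Theory.

Section Defs.
Variables (T : finType) (e : rel T).

Definition is_cycle (x : T) (p : seq T) : bool :=
  [&& path e x p, uniq (x :: p), 2 <= size p & e (last x p) x].

Definition is_tree : Prop :=
  0 < #|T| /\ (forall x y, connect e x y) /\ (forall x p, ~~ is_cycle x p).

Definition subcubic : Prop := forall x, #|[set y | e x y]| <= 3.

Definition isK13 : Prop :=
  #|T| = 4 /\ exists c : T, forall x y,
    e x y = ((x == c) && (y != c)) || ((y == c) && (x != c)).

(* usual distance: a walk of length k from u to v exists; minimal such k.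
   A shortest walk is a path, so its length is < #|T| when it exists. *)
Definition walk_len (u v : T) (k : nat) : bool :=
  [exists p : k.-tuple T, path e u p && (last u p == v)].

Definition distG (u v : T) : option nat :=
  let s := iota 0 #|T| in
  if has (walk_len u v) s then Some (find (walk_len u v) s) else None.

Definition Dpath_len (D : {set T}) (u v : T) (k : nat) : bool :=
  [exists p : k.-tuple T,
    [&& path e u p, last u p == v, uniq (u :: p),
        #|[set u; v] :&: D| == 1 &
        all (fun x => x \notin D) (behead (belast u p))]].

Definition distGD (D : {set T}) (u v : T) : option nat :=
  let s := iota 0 #|T| in
  if has (Dpath_len D u v) s then Some (find (Dpath_len D u v) s) else None.

(* (1/2)^(d-1) = 2 / 2^d, and (1/2)^infty = 0 *)
Definition halfpow (R : numFieldType) (d : option nat) : R :=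
  match d with Some k => 2%:R / (2%:R ^+ k) | None => 0 end.

Definition wGD (D : {set T}) (u : T) : rat :=
  (\sum_(v in D) halfpow rat (distGD D u v))%R.

Definition exp_dominating (D : {set T}) : bool :=
  [forall u, (1 <= wGD D u)%R].

(* minimum size of an exponential dominating set (setT is one, so the
   minimum is < #|T|.+1) *)
Definition gamma_e : nat :=
  find (fun k => [exists D : {set T}, (#|D| == k) && exp_dominating D])
       (iota 0 #|T|.+1).

Definition fpe_feasible (R : realFieldType) (x : T -> R) : Prop :=
  (forall u, (0 <= x u)%R) /\
  (forall v, (1 <= \sum_u halfpow R (distG u v) * x u)%R).

Definition is_fpe_opt (R : realFieldType) (val : R) : Prop :=
  (exists x, fpe_feasible x /\ (\sum_u x u)%R = val) /\
  (forall x, fpe_feasible x -> (val <= \sum_u x u)%R).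

End Defs.

(* Main.v *)
Require Import Defs.
From HB Require Import structures.
From mathcomp Require Import all_boot all_order all_algebra.
From mathcomp Require Import zify ring lra.
Set Implicit Arguments. Unset Strict Implicit. Unset Printing Implicit Defensive.
Import Order.TTheory GRing.Theory Num.Theory.

Section Tree.
Variables (T : finType) (e : rel T).
Hypothesis esym : symmetric e.
Hypothesis eirr : irreflexive e.
Hypothesis acyc : forall x p, ~~ is_cycle e x p.

Lemma two_paths x p q : path e x p -> path e x q -> uniq (x :: p) -> uniq (x :: q) ->
  last x p = last x q -> p != [::] -> q != [::] -> head x p != head x q -> False.
Proof.
move=> pp pq up uq lpq p0 q0 hpq.
have hasq : has (mem q) p.
  apply/hasP; exists (last x p).
    by case: p p0 {pp up lpq hpq} => // a p' _ /=; exact: mem_last.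
  by rewrite lpq; case: q q0 {pq uq lpq hpq} => // b q' _ /=; exact: mem_last.
set i := find (mem q) p.
have ip : i < size p by rewrite -has_find.
set w := nth x p i.
have wq : w \in q by exact: (nth_find x hasq).
set k := index w q.
have kq : k < size q by rewrite index_mem.
set s := take i.+1 p ++ rev (take k q).
apply: (negP (acyc x s)).
have ltw : last x (take i.+1 p) = w by rewrite (take_nth x ip) last_rcons.
have wqk : nth x q k = w by rewrite nth_index.
have pathq : path e x (rcons (take k q) w).
  by rewrite -wqk -take_nth // take_path.
have revq : path e w (rcons (rev (take k q)) x).
  move: pathq; rewrite -(rev_path) => pw.
  have -> : rcons (rev (take k q)) x = rev (belast x (rcons (take k q) w)).
    by rewrite belast_rcons rev_cons.
  by move: pw; rewrite last_rcons; apply: sub_path => a b /=; rewrite esym.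
apply/and4P; split.
- rewrite cat_path take_path //= ltw.
  by move: revq; rewrite rcons_path => /andP[].
- have xNp : x \notin p by move: up => /andP[].
  have xNq : x \notin q by move: uq => /andP[].
  rewrite /= mem_cat negb_or mem_rev.
  have -> : x \in take i.+1 p = false by apply/negP => /mem_take; apply/negP.
  have -> : x \in take k q = false by apply/negP => /mem_take; apply/negP.
  rewrite /=.
  have up' : uniq p by move: up => /andP[].
  have uq' : uniq q by move: uq => /andP[].
  rewrite cat_uniq rev_uniq !take_uniq //= andbT.
  apply/hasP => -[y]; rewrite mem_rev => yk yi.
  move: yi; rewrite (take_nth x ip) mem_rcons inE => /orP[/eqP yw|yi].
    by move: yk; rewrite yw in_take // ltnn.
  have : has (mem q) (take i p) by apply/hasP; exists y => //; exact: mem_take yk.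
  by rewrite has_take // ltnn.
- rewrite size_cat size_rev (size_takel ip) (size_takel (ltnW kq)) addSn ltnS addn_gt0.
  apply/orP; case: (posnP i) => [i0|]; [right|by left].
  rewrite lt0n; apply/eqP => k0.
  have : nth x p i = nth x q k by rewrite wqk.
  by rewrite i0 k0 !nth0 => h; rewrite h eqxx in hpq.
- rewrite last_cat ltw.
  by move: revq; rewrite rcons_path => /andP[_].
Qed.

Lemma path_unique x p q : path e x p -> path e x q -> uniq (x :: p) -> uniq (x :: q) ->
  last x p = last x q -> p = q.
Proof.
elim: p x q => [|a p IH] x [|b q] //=.
- move=> _ _ _ /andP[xq _] lq; exfalso; move: xq; rewrite lq.
  by rewrite (mem_last b q).
- move=> _ _ /andP[xp _] _ lq; exfalso; move: xp; rewrite -lq.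
  by rewrite (mem_last a p).
- move=> /andP[xa pa] /andP[xb qb] /andP[xNp up] /andP[xNq uq] l.
  case: (eqVneq a b) => [ab|ab].
    by subst b; rewrite (IH a q).
  exfalso; apply: (@two_paths x (a :: p) (b :: q)) => //=.
  + by rewrite xa pa.
  + by rewrite xb qb.
  + by rewrite xNp up.
  + by rewrite xNq uq.
Qed.

Hypothesis conn : forall x y, connect e x y.

Lemma ex_upath x y : exists p, [&& path e x p, uniq (x :: p) & last x p == y].
Proof.
have /connectP[p pp ->] := conn x y.
case/shortenP: pp => p' pp' up' _.
by exists p'; rewrite pp' up' eqxx.
Qed.

Definition Pth x y := xchoose (ex_upath x y).

Lemma Pth_spec x y : [&& path e x (Pth x y), uniq (x :: Pth x y) & last x (Pth x y) == y].
Proof. exact: (xchooseP (ex_upath x y)). Qed.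

Lemma Pth_path x y : path e x (Pth x y).
Proof. by case/and3P: (Pth_spec x y). Qed.
Lemma Pth_uniqs x y : uniq (x :: Pth x y).
Proof. by case/and3P: (Pth_spec x y). Qed.
Lemma Pth_last x y : last x (Pth x y) = y.
Proof. by case/and3P: (Pth_spec x y) => _ _ /eqP. Qed.

Lemma Pth_uniq x y p : path e x p -> uniq (x :: p) -> last x p = y -> p = Pth x y.
Proof.
move=> pp up lp; apply: (path_unique pp (Pth_path x y) up (Pth_uniqs x y)).
by rewrite lp Pth_last.
Qed.

Definition dd x y := size (Pth x y).
Definition par r w := last r (belast r (Pth r w)).

Lemma Pth_rr r : Pth r r = [::].
Proof. by symmetry; apply: Pth_uniq. Qed.

Lemma dd_rr r : dd r r = 0.
Proof. by rewrite /dd Pth_rr. Qed.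

Lemma Pth_rcons r w : w != r -> Pth r w = rcons (Pth r (par r w)) w.
Proof.
move=> wr; rewrite /par.
have := Pth_path r w; have := Pth_uniqs r w; have := Pth_last r w.
case/lastP: (Pth r w) => [/= rw|P' z]; first by rewrite rw eqxx in wr.
rewrite last_rcons belast_rcons => -> uP pP.
congr rcons; apply: Pth_uniq => //.
- by move: pP; rewrite rcons_path => /andP[].
- by move: uP; rewrite -[r :: rcons P' w]/(rcons (r :: P') w) rcons_uniq => /andP[].
Qed.

Lemma par_edge r w : w != r -> e (par r w) w.
Proof.
move=> wr; have := Pth_path r w; rewrite (Pth_rcons wr) rcons_path => /andP[_].
by rewrite Pth_last.
Qed.

Lemma dd_par r w : w != r -> dd r w = (dd r (par r w)).+1.
Proof. by move=> wr; rewrite /dd {1}(Pth_rcons wr) size_rcons. Qed.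

Lemma last_take_nth (x : T) s j : j <= size s -> last x (take j s) = nth x (x :: s) j.
Proof.
elim: s x j => [|a s IH] x [|j] //= js.
by rewrite IH // (set_nth_default x).
Qed.

Lemma dd_prefix r v w : w \in r :: Pth r v -> (dd r w < dd r v) || (w == v).
Proof.
move=> wP; set j := index w (r :: Pth r v).
have jP : j <= size (Pth r v) by rewrite -ltnS -[X in _ < X]/(size (r :: Pth r v)) index_mem.
have lt : last r (take j (Pth r v)) = w by rewrite last_take_nth // nth_index.
rewrite /dd.
have -> : Pth r w = take j (Pth r v).
  symmetry; apply: Pth_uniq => //.
  - exact: take_path (Pth_path r v).
  - have := take_uniq j.+1 (Pth_uniqs r v); by [].
rewrite (size_takel jP) ltn_neqAle jP andbT.
case: eqP => //= jE; apply/eqP.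
by rewrite -lt jE take_size Pth_last.
Qed.

Lemma ext_path r v w : e v w -> w \notin r :: Pth r v -> (w != r) && (par r w == v).
Proof.
move=> evw wN.
have E : Pth r w = rcons (Pth r v) w.
  symmetry; apply: Pth_uniq; last by rewrite last_rcons.
  - by rewrite rcons_path Pth_path Pth_last.
  - by rewrite -rcons_cons rcons_uniq wN Pth_uniqs.
apply/andP; split.
  by apply: contra wN => /eqP ->; rewrite mem_head.
by rewrite /par E belast_rcons /= Pth_last.
Qed.

Lemma edge_par r v w : e v w -> ((w != r) && (par r w == v)) || ((v != r) && (par r v == w)).
Proof.
move=> evw; case: (boolP (w \in r :: Pth r v)) => wP; last by rewrite ext_path.
have vN : v \notin r :: Pth r w.
  apply/negP => vP.
  have wv : w != v by apply: contraTneq evw => ->; rewrite eirr.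
  move: (dd_prefix wP) (dd_prefix vP); rewrite (negbTE wv) eq_sym (negbTE wv) !orbF.
  by move=> h1 h2; move: (ltn_trans h1 h2); rewrite ltnn.
by rewrite (@ext_path r w v) ?orbT // esym.
Qed.

Lemma par_excl r v w : (w != r) && (par r w == v) -> (v != r) && (par r v == w) -> False.
Proof.
move=> /andP[wr /eqP pw] /andP[vr /eqP pv].
have h1 := dd_par wr; have h2 := dd_par vr; rewrite pw in h1; rewrite pv in h2.
lia.
Qed.

Lemma edge_nat r v w : (e v w : nat) = (((w != r) && (par r w == v)) : nat) + (((v != r) && (par r v == w)) : nat).
Proof.
case: (boolP (e v w)) => evw.
  have := edge_par r evw.
  case A: ((w != r) && (par r w == v)); case B: ((v != r) && (par r v == w)) => //.
  by exfalso; apply: (par_excl A B).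
case A: ((w != r) && (par r w == v)).
  by move: A evw => /andP[wr /eqP <-]; rewrite par_edge.
case B: ((v != r) && (par r v == w)) => //.
by move: B evw => /andP[vr /eqP <-]; rewrite esym par_edge.
Qed.


Lemma find_iota_eq (P : pred nat) N k : k < N -> P k -> (forall j, j < k -> ~~ P j) ->
  has P (iota 0 N) && (find P (iota 0 N) == k).
Proof.
move=> kN Pk Pj.
have -> : iota 0 N = iota 0 k ++ k :: iota k.+1 (N - k.+1).
  by rewrite -[in LHS](subnKC kN) addSnnS iotaD.
have hk : has P (iota 0 k) = false.
  apply/hasPn => j; rewrite mem_iota => /andP[_ jk]; exact: Pj.
by rewrite has_cat hk /= Pk find_cat hk /= Pk size_iota addn0 eqxx.
Qed.

Lemma dd_lt x y : dd x y < #|T|.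
Proof.
have := Pth_uniqs x y; move/card_uniqP => h.
by have := max_card (mem (x :: Pth x y)); rewrite h.
Qed.

Lemma distG_dd x y : distG e x y = Some (dd x y).
Proof.
rewrite /distG.
suff [h1 h2] : walk_len e x y (dd x y) /\ (forall j, j < dd x y -> ~~ walk_len e x y j).
  by have /andP[-> /eqP ->] := find_iota_eq (dd_lt x y) h1 h2.
split.
- apply/existsP; exists (in_tuple (Pth x y)); by rewrite /= Pth_path Pth_last eqxx.
- move=> j jd; apply/existsP => -[t /andP[tp /eqP tl]].
  move: tl; case/shortenP: tp => p' pp' up' sub' lp.
  have E := Pth_uniq pp' up' lp; subst p'.
  have : size (Pth x y) <= size t.
    apply: uniq_leq_size sub'.
    by move: up' => /andP[].
  by rewrite size_tuple => h; move: (leq_ltn_trans h jd); rewrite ltnNge /dd leqnn.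
Qed.

Lemma revkey x y : y :: rev (belast x (Pth x y)) = rev (x :: Pth x y).
Proof. by rewrite [x :: Pth x y]lastI rev_rcons Pth_last. Qed.

Lemma Pth_rev x y : Pth y x = rev (belast x (Pth x y)).
Proof.
have key := revkey x y.
symmetry; apply: Pth_uniq.
- rewrite -[y in path e y _](Pth_last x y) rev_path.
  by apply: sub_path (Pth_path x y) => a b /=; rewrite esym.
- by rewrite key rev_uniq Pth_uniqs.
- have : last y (rev (belast x (Pth x y))) = last y (y :: rev (belast x (Pth x y))) by [].
  by rewrite key rev_cons last_rcons.
Qed.

Lemma dd_sym x y : dd x y = dd y x.
Proof. by rewrite /dd Pth_rev size_rev size_belast. Qed.

Lemma mem_Pth_rev x y z : (z \in y :: Pth y x) = (z \in x :: Pth x y).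
Proof.
by rewrite Pth_rev revkey mem_rev.
Qed.

Lemma Dpath_Pth (D : {set T}) u v k : Dpath_len e D u v k ->
  [/\ k = dd u v, #|[set u; v] :&: D| = 1 & all (fun x => x \notin D) (behead (belast u (Pth u v)))].
Proof.
move=> /existsP[t /and5P[tp /eqP tl tu /eqP c a]].
have E := Pth_uniq tp tu tl.
by split => //; rewrite -?E // /dd -E size_tuple.
Qed.

Lemma distGD_cases (D : {set T}) u v : distGD e D u v = None \/ distGD e D u v = Some (dd u v).
Proof.
rewrite /distGD; case: ifP => h; [right | by left].
have hf := h; rewrite has_find size_iota in hf.
by have := nth_find 0 h; rewrite nth_iota // add0n => /Dpath_Pth[<-].
Qed.

Lemma distGD_none (D : {set T}) u v z : z \in D -> z \in behead (belast u (Pth u v)) -> distGD e D u v = None.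
Proof.
move=> zD zP; rewrite /distGD; case: ifP => // h; exfalso.
have := nth_find 0 h; move/Dpath_Pth => [_ _ /allP /(_ z zP)].
by rewrite zD.
Qed.


Definition deg v := #|[set w | e v w]|.

Lemma deg_sum v : deg v = \sum_w (e v w : nat).
Proof.
rewrite /deg -sum1_card big_mkcond /=; apply: eq_bigr => w _.
by rewrite in_set; case: (e v w).
Qed.

Lemma sum_pick (R : ringType) (b : bool) (a : T) (F : T -> R) :
  (\sum_w ((b && (a == w)) : nat)%:R * F w = (b : nat)%:R * F a)%R.
Proof.
rewrite (bigD1 a) //= eqxx andbT big1 ?addr0 // => w wa.
by rewrite eq_sym (negbTE wa) andbF mul0r.
Qed.

Lemma sum_deg (R : ringType) r (f : T -> R) :
  (\sum_v (deg v)%:R * f v = \sum_(w | w != r) (f (par r w) + f w))%R.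
Proof.
have E v : ((deg v)%:R * f v = \sum_w (((w != r) && (par r w == v)) : nat)%:R * f v
   + \sum_w (((v != r) && (par r v == w)) : nat)%:R * f v)%R.
  rewrite deg_sum natr_sum mulr_suml -big_split /=; apply: eq_bigr => w _.
  by rewrite (edge_nat r v w) natrD mulrDl.
rewrite (eq_bigr _ (fun v _ => E v)) big_split /= exchange_big /=.
rewrite (eq_bigr (fun w => ((w != r) : nat)%:R * f (par r w))%R); last first.
  by move=> w _; rewrite sum_pick.
rewrite [X in (_ + X)%R](eq_bigr (fun v => ((v != r) : nat)%:R * f v)%R); last first.
  by move=> v _; rewrite (sum_pick _ _ (fun _ => f v)).
rewrite -big_split /= [RHS]big_mkcond /=; apply: eq_bigr => w _.
by case: (w != r) => /=; rewrite ?mul1r ?mul0r ?addr0.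
Qed.

Local Open Scope ring_scope.
Definition gg (R : fieldType) r v : R := (((2%:R : R) ^+ dd r v)^-1)%R.

Lemma sum_gg (R : realFieldType) r :
  (\sum_v (3%:R - (deg v)%:R) * gg R r v = 3%:R)%R.
Proof.
have two0 : (2%:R : R) != 0 by rewrite pnatr_eq0.
rewrite (eq_bigr (fun v => 3%:R * gg R r v - (deg v)%:R * gg R r v)%R); last first.
  by move=> v _; rewrite mulrBl.
rewrite sumrB (sum_deg r) (bigD1 r) //= {1}/gg dd_rr expr0 invr1 mulr1.
rewrite [X in _ - X](eq_bigr (fun w => 3%:R * gg R r w)); last first.
  move=> w wr; rewrite /gg (dd_par wr) exprS invfM.
  by field; rewrite expf_neq0.
by rewrite -!mulr_sumr addrK.
Qed.

Lemma id1 (R : realFieldType) r :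
  (\sum_v ((3%:R - (deg v)%:R) / 6%:R) * halfpow R (distG e r v) = 1)%R.
Proof.
rewrite (eq_bigr (fun v => (1 / 3%:R) * ((3%:R - (deg v)%:R) * gg R r v))%R); last first.
  move=> v _; rewrite distG_dd /halfpow /gg.
  have h6 : (6%:R : R) = 3%:R * 2%:R by rewrite -natrM.
  by rewrite h6; field; rewrite ?expf_neq0 ?pnatr_eq0.
by rewrite -mulr_sumr sum_gg; field.
Qed.

Lemma id2 (R : realFieldType) (r : T) :
  (\sum_v ((3%:R - (deg v)%:R) / 6%:R : R) = (#|T|%:R + 2%:R) / 6%:R)%R.
Proof.
rewrite -mulr_suml; congr (_ * _).
have cT : (#|T|%:R : R) = \sum_(v : T) 1.
  by rewrite sumr_const.
rewrite sumrB cT (bigD1 r) //= [X in _ = X + _](bigD1 r) //=.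
have := sum_deg r (fun _ => 1 : R); rewrite (eq_bigr (fun v => (deg v)%:R)); last by move=> v _; rewrite mulr1.
move=> ->.
have -> : \sum_(i | i != r) (3%:R : R) = \sum_(i | i != r) (1 + 1) + \sum_(i | i != r) 1.
  by rewrite -big_split; apply: eq_bigr => i _ /=; lra.
set s1 := \sum_(i | _) (1 + 1); set s2 := \sum_(i | _) 1.
lra.
Qed.


Definition yy (R : realFieldType) v : R := (3%:R - (deg v)%:R) / 6%:R.

Lemma yy_ge0 (R : realFieldType) v : (deg v <= 3)%N -> 0 <= yy R v.
Proof.
move=> dv; rewrite /yy divr_ge0 ?ler0n // subr_ge0 ler_nat //.
Qed.

Lemma hp_ge0 (R : realFieldType) d : 0 <= halfpow R d.
Proof. by case: d => [k|] //=; rewrite divr_ge0 ?exprn_ge0 ?ler0n. Qed.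

Lemma opt_val (R : realFieldType) (r : T) (opt : R) :
  (forall v, deg v <= 3)%N -> is_fpe_opt e opt -> opt = (#|T|%:R + 2%:R) / 6%:R.
Proof.
move=> sub [[x [[x0 xc] xs]] xmin].
have yf : fpe_feasible e (yy R).
  split=> [v|v]; first exact: yy_ge0.
  rewrite -(id1 R v) le_eqVlt; apply/orP; left; apply/eqP; apply: eq_bigr => u _.
  by rewrite !distG_dd dd_sym mulrC.
apply/eqP; rewrite eq_le; apply/andP; split.
  by rewrite -(id2 R r); apply: xmin.
rewrite -(id2 R r) -xs.
rewrite [X in _ <= X](eq_bigr (fun u => \sum_v yy R v * halfpow R (distG e u v) * x u)); last first.
  by move=> u _; rewrite -mulr_suml id1 mul1r.
rewrite exchange_big /=; apply: ler_sum => v _.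
rewrite (eq_bigr (fun u => yy R v * (halfpow R (distG e u v) * x u))); last first.
  by move=> u _; rewrite mulrA.
rewrite -mulr_sumr -[X in X <= _]mulr1; apply: ler_wpM2l; first exact: yy_ge0.
exact: xc.
Qed.


Lemma internal (v u z : T) : z \in v :: Pth v u -> z != v -> z != u ->
  z \in behead (belast v (Pth v u)).
Proof.
have := Pth_last v u; case/lastP: (Pth v u) => [|p' w] /=.
  by move=> <-; rewrite inE => /eqP ->; rewrite eqxx.
rewrite last_rcons belast_rcons => -> /=.
by rewrite inE mem_rcons inE => /orP[->|/orP[->|]].
Qed.

Lemma leaf_below r u1 : u1 != r -> (1 < deg u1)%N ->
  exists v, [/\ (deg v <= 1)%N, u1 \in Pth r v & v != u1].
Proof.
move=> u1r du1.
have Su1 : u1 \in Pth r u1 by rewrite (Pth_rcons u1r) mem_rcons mem_head.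
case: (@arg_maxnP T u1 (fun v => u1 \in Pth r v) (dd r) Su1) => v Sv vmax.
have nb w : e v w -> par r v = w.
  move=> evw; case/orP: (edge_par r evw) => /andP[wr /eqP pw]; last by [].
  have Sw : u1 \in Pth r w by rewrite (Pth_rcons wr) pw mem_rcons inE Sv orbT.
  have h1 : (dd r w <= dd r v)%N by exact: vmax w Sw.
  by move: h1; rewrite (dd_par wr) pw ltnn.
have dv : (deg v <= 1)%N.
  rewrite /deg -(cards1 (par r v)); apply: subset_leq_card; apply/subsetP => w.
  by rewrite !inE => /nb <-.
exists v; split => //; apply: contraTneq dv => ->; by rewrite -ltnNge.
Qed.


Lemma hp_pos (k : nat) : 0 < halfpow rat (Some k).
Proof. by rewrite /= divr_gt0 ?exprn_gt0 ?ltr0n. Qed.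

Lemma main_fwd (sub : forall v, (deg v <= 3)%N) (D : {set T}) :
  exp_dominating e D -> (6 * #|D| = #|T| + 2)%N -> isK13 e.
Proof.
move=> /forallP dom hD.
pose A v : rat := \sum_(u in D) halfpow rat (distG e u v).
have wA v u : u \in D -> halfpow rat (distGD e D v u) <= halfpow rat (distG e u v).
  move=> _; case: (distGD_cases D v u) => ->; first exact: hp_ge0.
  by rewrite distG_dd dd_sym.
have wA' v : wGD e D v <= A v by apply: ler_sum => u uD; exact: wA.
have sumA : \sum_v yy rat v * A v = #|D|%:R.
  rewrite /A (eq_bigr (fun v => \sum_(u in D) yy rat v * halfpow rat (distG e u v))); last first.
    by move=> v _; rewrite mulr_sumr.
  rewrite exchange_big /= (eq_bigr (fun _ => 1)); last by move=> u _; exact: id1.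
  by rewrite sumr_const.
have D0 : (0 < #|D|)%N.
  by rewrite -(ltn_pmul2l (isT : (0 < 6)%N)) muln0 hD addn2.
have [r _] : exists r, r \in D by apply/card_gt0P.
have sumY : \sum_v yy rat v = #|D|%:R.
  rewrite /yy (id2 rat r).
  have : (6 * #|D|)%:R = (#|T| + 2)%:R :> rat by rewrite hD.
  by rewrite natrM natrD => <-; field.
have terms v : yy rat v * (A v - 1) = 0.
  apply: (@psumr_eq0P _ _ predT (fun v => yy rat v * (A v - 1))) => //.
    move=> w _; apply: mulr_ge0; first exact: yy_ge0.
    by rewrite subr_ge0; apply: le_trans (dom w) (wA' w).
  rewrite (eq_bigr (fun v => yy rat v * A v - yy rat v)); last by move=> w _; rewrite mulrBr mulr1.
  by rewrite sumrB sumA sumY subrr.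
have tight v : (deg v <= 2)%N -> A v = 1 /\ wGD e D v = 1.
  move=> dv; have := terms v; move/eqP; rewrite mulf_eq0 => /orP[|/eqP h].
    rewrite /yy mulf_eq0 invr_eq0 pnatr_eq0 orbF subr_eq0 eqr_nat => /eqP h.
    by move: dv; rewrite -h.
  have Av : A v = 1 by apply/eqP; rewrite -subr_eq0 h.
  split => //; apply/eqP; rewrite eq_le dom andbT; rewrite -Av; exact: wA'.
have termwise v u : (deg v <= 2)%N -> u \in D ->
    halfpow rat (distGD e D v u) = halfpow rat (distG e u v).
  move=> dv uD; apply/eqP; rewrite eq_sym -subr_eq0; apply/eqP.
  apply: (@psumr_eq0P _ _ (mem D) (fun u => halfpow rat (distG e u v) - halfpow rat (distGD e D v u))) => //.
    by move=> w wD; rewrite subr_ge0; exact: wA.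
  have [Av wv] := tight v dv.
  by rewrite sumrB -/(A v) Av -/(wGD e D v) wv subrr.
have D3 u : u \in D -> deg u = 3.
  move=> uD; apply/eqP; rewrite eqn_leq sub /= leqNgt; apply/negP => du.
  have [Au _] := tight u du.
  have : halfpow rat (distG e u u) <= A u.
    rewrite /A (bigD1 u) //= lerDl; apply: sumr_ge0 => *; exact: hp_ge0.
  by rewrite Au distG_dd /dd Pth_rr /= expr0 divr1; lra.
have D1 : #|D| = 1%N.
  apply/eqP; rewrite eqn_leq D0 andbT leqNgt; apply/negP => /card_gt1P [u1 [u2 [u1D u2D u12]]].
  have du1 : (1 < deg u1)%N by rewrite D3.
  have [v [dv u1v vu1]] := leaf_below u12 du1.
  have := termwise v u2 (leq_trans dv (isT : (1 <= 2)%N)) u2D.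
  rewrite (@distGD_none D v u2 u1) //; last first.
    apply: internal => //; last by rewrite eq_sym.
    by rewrite mem_Pth_rev inE u1v orbT.
  rewrite distG_dd => /eqP; rewrite eq_sym; move/eqP => h.
  by have := hp_pos (dd u2 v); rewrite h ltxx.
move/eqP/cards1P: D1 => [c Dc].
have cD : c \in D by rewrite Dc set11.
have nT : #|T| = 4 by move: hD; rewrite Dc cards1; lia.
split => //; exists c => x y.
set N := [set w | e c w].
have dc : #|N| = 3 := D3 c cD.
have cN : c \notin N by rewrite inE eirr.
have all_in z : z \in c |: N.
  have : c |: N == [set: T] by rewrite eqEcard subsetT cardsT cardsU1 cN dc nT.
  by move/eqP ->; rewrite inE.
have inN z : z != c -> e c z.
  by move=> zc; move: (all_in z); rewrite !inE (negbTE zc).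
case: (eqVneq x c) => [->|xc]; case: (eqVneq y c) => [->|yc] /=.
- by rewrite eirr.
- by rewrite inN.
- by rewrite esym inN.
- apply/negP => exy; apply: (negP (acyc c [:: x; y])).
  rewrite /is_cycle /= inN // exy esym inN //= !inE negb_or eq_sym xc eq_sym yc /=.
  rewrite !andbT; by apply: contraTneq exy => ->; rewrite eirr.
Qed.

End Tree.

Section Final.
Local Open Scope ring_scope.
Variables (T : finType) (e : rel T).

Lemma distGD_self (D : {set T}) u : u \in D -> distGD e D u u = Some 0%N.
Proof.
move=> uD; rewrite /distGD.
have N0 : (0 < #|T|)%N by apply/card_gt0P; exists u.
suff h0 : Dpath_len e D u u 0.
  have /andP[-> /eqP ->] // := find_iota_eq N0 h0 (fun j (hj : (j < 0)%N) => False_ind _ (notF hj)).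
apply/existsP; exists [tuple] => /=.
have -> : [set u; u] = [set u] by apply/setP => z; rewrite !inE orbb.
by rewrite eqxx (setIidPl _) ?cards1 // sub1set.
Qed.

Lemma wGD_self (D : {set T}) u : u \in D -> 2%:R <= wGD e D u.
Proof.
move=> uD; rewrite /wGD (bigD1 u) //= distGD_self //= expr0 divr1 lerDl.
by apply: sumr_ge0 => v _; case: (distGD e D u v) => [k|] //=; rewrite divr_ge0 ?exprn_ge0 ?ler0n.
Qed.

Lemma setT_dom : exp_dominating e [set: T].
Proof.
apply/forallP => u; apply: le_trans (wGD_self (in_setT u)); by rewrite ler1n.
Qed.

Lemma gamma_spec : exists D : {set T}, #|D| = gamma_e e /\ exp_dominating e D.
Proof.
set P := (fun k => [exists D : {set T}, (#|D| == k) && exp_dominating e D]).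
have hP : has P (iota 0 #|T|.+1).
  apply/hasP; exists #|T|; first by rewrite mem_iota add0n ltnSn.
  apply/existsP; exists [set: T]; by rewrite cardsT eqxx setT_dom.
have := nth_find 0 hP; rewrite -/(gamma_e e).
have hf := hP; rewrite has_find size_iota in hf.
rewrite nth_iota // add0n => /existsP[D /andP[/eqP h1 h2]].
by exists D.
Qed.

Lemma gamma_K13 : isK13 e -> gamma_e e = 1%N.
Proof.
move=> [nT [c ec]].
have uc u : u != c -> distGD e [set c] u c = Some 1%N.
  move=> ucn; rewrite /distGD.
  have h1 : Dpath_len e [set c] u c 1.
    apply/existsP; exists [tuple c] => /=.
    rewrite ec eqxx inE (negbTE ucn) /=.
    by rewrite andbT (setIidPr _) ?cards1 // sub1set !inE eqxx orbT.
  have h0 j : (j < 1)%N -> ~~ Dpath_len e [set c] u c j.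
    rewrite ltnS leqn0 => /eqP ->; apply/existsP => -[t].
    move=> /and5P[_ /eqP lt _ _ _]; move: lt; rewrite (tuple0 t) /= => uc2.
    by rewrite uc2 eqxx in ucn.
  have N1 : (1 < #|T|)%N by rewrite nT.
  by have /andP[-> /eqP ->] := find_iota_eq N1 h1 h0.
have dom : exp_dominating e [set c].
  apply/forallP => u; case: (eqVneq u c) => [->|ucn].
    by apply: le_trans (wGD_self (set11 c)); rewrite ler1n.
  by rewrite /wGD big_set1 uc //= expr1 divff // pnatr_eq0.
rewrite /gamma_e.
have h1 : [exists D : {set T}, (#|D| == 1%N) && exp_dominating e D].
  by apply/existsP; exists [set c]; rewrite cards1 eqxx dom.
have h0 j : (j < 1)%N -> ~~ [exists D : {set T}, (#|D| == j) && exp_dominating e D].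
  rewrite ltnS leqn0 => /eqP ->; apply/existsP => -[D /andP[/eqP D0 /forallP /(_ c)]].
  by move/eqP: D0; rewrite cards_eq0 => /eqP ->; rewrite /wGD big_set0 ler10.
have N1 : (1 < #|T|.+1)%N by rewrite nT.
have := find_iota_eq N1 h1 h0.
by case/andP => _ /eqP.
Qed.

End Final.

Theorem theorem4 (T : finType) (e : rel T) (R : realFieldType) (opt : R) :
  symmetric e -> irreflexive e -> is_tree e -> subcubic e ->
  is_fpe_opt e opt ->
  (((gamma_e e)%:R)%R = opt <-> isK13 e).
Proof.
move=> es ei [T0 [conn acyc]] sub hopt.
have [r _] : exists r : T, r \in T by apply/card_gt0P.
have ov := opt_val es ei acyc conn r sub hopt.
split.
- move=> hg; have [D [hD dom]] := gamma_spec e.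
  apply: (main_fwd es ei acyc conn sub dom).
  apply/eqP; rewrite -(eqr_nat R) natrM natrD hD hg ov.
  by apply/eqP; field.
- move=> K; rewrite (gamma_K13 K) ov.
  by have [nT _] := K; rewrite nT; field.
Qed.
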